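(* In the toy model (see context), let $S=\sum_{i=0}^{L-1}[\![\Delta\alpha_i]\!]$, $\omega_i=\Delta\alpha_i-[\![\Delta\alpha_i]\!]$, let $\sigma$ be the permutation of $\{0,\dots,L-1\}$ with $\omega_{\sigma(0)}<\omega_{\sigma(1)}<\dots<\omega_{\sigma(L-1)}$, and let $k^+$ be as defined in the context. Then the maximum $z^+_{\max}=\max_i z^+_i$ of the rescaled well coordinates of the threshold configuration is $$z^+_{\max}=\begin{cases}\omega_{\sigma(S)}+1 & S\ge0,\ k^+\ne\sigma(S),\\ \omega_{\sigma(S-1)}+1 & S>0,\ k^+=\sigma(S),\\ \omega_{\sigma(L-1)} & S=0,\ k^+=\sigma(0),\\ \omega_{\sigma(L-|S|)} & S<0,\ k^+\ne\sigma(L-|S|),\\ \omega_{\sigma(L-|S|-1)} & S<0,\ k^+=\sigma(L-|S|),\end{cases}$$ and the threshold force is $F_{\mathrm{th}}=\lambda\left(\tfrac12-\eta z^+_{\max}\right)$.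
   Context: Toy model: $L$ sites with periodic boundary conditions (indices mod $L$); disorder $\alpha_0,\dots,\alpha_{L-1}$ i.i.d. uniform on $(-\tfrac12,\tfrac12)$, extended periodically; $\lambda>0$ and $\eta=\frac{2}{2+\lambda+\sqrt{\lambda^2+4\lambda}}$; $\Delta x_i=x_{i-1}-2x_i+x_{i+1}$ (periodic); $[\![x]\!]$ is the integer nearest to $x$. A configuration $\vec m\in\mathbb Z^L$ has well coordinates at force $0$ given by $\tilde y_i=\eta z_i$ with rescaled well coordinates $z_i=\Delta m_i+\Delta\alpha_i$. The threshold configuration $\vec m^+$ (a.s. unique up to adding a common integer) attains $\min_{\vec m}\max_i z_i$; $z^+_i$ are its rescaled well coordinates. The threshold force is $F_{\mathrm{th}}=\lambda(\tfrac12-\min_{\vec m}\max_i\tilde y_i)$. The index $k^+$: define $\vec J$ by $J_i=1$ for the $S+1$ indices with smallest $\omega_i$ (others $0$) if $S\ge0$, and $J_i=-1$ for the $|S|-1$ indices with largest $\omega_i$ (others $0$) if $S<0$; then $k^+\in\{0,\dots,L-1\}$, $k^+\equiv\sum_{i=0}^{L-1}i(-[\![\Delta\alpha_i]\!]+J_i)\pmod L$. *)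

(* Defs.v *)
From HB Require Import structures.
From mathcomp Require Import all_boot all_order all_algebra.
From mathcomp Require Import classical_sets reals.
Set Implicit Arguments. Unset Strict Implicit. Unset Printing Implicit Defensive.
Import Order.TTheory GRing.Theory Num.Theory.
Local Open Scope ring_scope.
Local Open Scope classical_set_scope.

(* Sites are 0..L-1; a configuration / disorder is a function on nat, used
   only through indices taken mod L (periodic boundary conditions). *)

Definition lap (V : zmodType) (L : nat) (x : nat -> V) (i : nat) : V :=
  x ((i + L - 1) %% L)%N - x (i %% L)%N *+ 2 + x (i.+1 %% L)%N.

(* nearest integer [[x]] (ties, a null set here, rounded up) *)
Definition nint (R : realType) (x : R) : int := Num.floor (x + 2^-1).

(* maximum over the sites 0..L-1 (meaningful for L > 0) *)
Definition maxL (R : realType) (L : nat) (f : nat -> R) : R :=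
  \big[Num.max/f 0%N]_(i < L) f i.

Definition eta_lam (R : realType) (lambda : R) : R :=
  2 / (2 + lambda + Num.sqrt (lambda ^+ 2 + 4 * lambda)).

Definition zc (R : realType) (L : nat) (alpha : nat -> R) (m : nat -> int)
  (i : nat) : R := (lap L m i)%:~R + lap L alpha i.

(* well coordinates at force 0: y~_i = eta z_i *)
Definition ytilde (R : realType) (L : nat) (lambda : R) (alpha : nat -> R)
  (m : nat -> int) (i : nat) : R := eta_lam lambda * zc L alpha m i.

Definition is_threshold_config (R : realType) (L : nat) (alpha : nat -> R)
  (m : nat -> int) : Prop :=
  forall m' : nat -> int, maxL L (zc L alpha m) <= maxL L (zc L alpha m').

Definition Fth (R : realType) (L : nat) (lambda : R) (alpha : nat -> R) : R :=
  lambda * (2^-1 - inf [set maxL L (ytilde L lambda alpha m) | m in setT]).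

Definition Ssum (R : realType) (L : nat) (alpha : nat -> R) : int :=
  \sum_(i < L) nint (lap L alpha i).

Definition omega (R : realType) (L : nat) (alpha : nat -> R) (i : nat) : R :=
  lap L alpha i - (nint (lap L alpha i))%:~R.

(* J_i : if S >= 0, J_i = 1 for the S+1 indices with smallest ω (i.e. at most S
   indices have smaller ω); if S < 0, J_i = -1 for the |S|-1 indices with
   largest ω (fewer than |S|-1 indices have larger ω); 0 otherwise.
   (ω is injective on the sites, so these are exactly the prescribed sets.) *)
Definition Jv (R : realType) (L : nat) (alpha : nat -> R) (i : nat) : int :=
  let S := Ssum L alpha in
  let w := omega L alpha in
  if (0 <= S)%R then
    (if leq (count (fun j => (w j < w i)%R) (iota 0 L)) `|S| then 1 else 0)
  else
    (if leq (count (fun j => (w i < w j)%R) (iota 0 L)).+1 `|S|.-1 then -1 else 0).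

Definition kplus (R : realType) (L : nat) (alpha : nat -> R) : int :=
  ((\sum_(i < L) (i%:Z) * (- nint (lap L alpha i) + Jv L alpha i)) %% (L%:Z))%Z.

(* Main.v *)
Require Import Defs.
From HB Require Import structures.
From mathcomp Require Import all_boot all_order all_algebra.
From mathcomp Require Import classical_sets reals.
From mathcomp Require Import zify ring lra.
Import Order.TTheory GRing.Theory Num.Theory.
Local Open Scope ring_scope.

Section Gen.
Variable L : nat.
Hypothesis L0 : (0 < L)%N.

Lemma lapE (V : zmodType) (x : nat -> V) (i : 'I_L) :
  lap L x i = x (ord_pred i) - x i *+ 2 + x (ordS i).
Proof. rewrite /lap /= (modn_small (ltn_ord i)) subn1. done. Qed.

Lemma sum_lap (V : zmodType) (x : nat -> V) : \sum_(i < L) lap L x i = 0.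
Proof.
under eq_bigr do rewrite lapE.
rewrite !big_split sumrN sumrMnl.
have -> : \sum_(i < L) x (ord_pred i) = \sum_(i < L) x i.
  by rewrite [RHS](reindex_inj (@ord_pred_inj L)).
have -> : \sum_(i < L) x (ordS i) = \sum_(i < L) x i.
  by rewrite [RHS](reindex_inj (@ordS_inj L)).
change ((\sum_(i<L) x i) - (\sum_(i<L) x i) *+ 2 + \sum_(i<L) x i = 0).
by rewrite mulr2n opprD addrA subrr sub0r addNr.
Qed.

Lemma sum_ilap (m : nat -> int) :
  exists c : int, \sum_(i < L) (i%:Z) * lap L m i = c * L%:Z.
Proof.
pose c (j : 'I_L) : int := 1 - (j.+1 %/ L)%:Z - ((j + L).-1 %/ L)%:Z.
have key (j : 'I_L) : ((ordS j : nat)%:Z + (ord_pred j : nat)%:Z - 2 * j%:Z)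
     = c j * L%:Z.
  rewrite /c /=.
  have E1 := divn_eq j.+1 L; have E2 := divn_eq (j + L).-1 L.
  have := ltn_ord j; nia.
exists (\sum_(j < L) c j * m j).
under eq_bigr do rewrite lapE.
rewrite mulr_suml.
have -> : \sum_(i < L) i%:Z * (m (ord_pred i) - m i *+ 2 + m (ordS i)) =
  \sum_(i < L) (i%:Z * m (ord_pred i)) + \sum_(i < L) (i%:Z * m (ordS i))
  - \sum_(i < L) (2 * i%:Z * m i).
  rewrite -big_split -sumrB /=; apply: eq_bigr => i _; ring.
have -> : \sum_(i < L) (i%:Z * m (ord_pred i)) =
          \sum_(j < L) ((ordS j : nat)%:Z * m j).
  rewrite (reindex_inj (@ordS_inj L)); apply: eq_bigr => j _.
  by rewrite ordSK.
have -> : \sum_(i < L) (i%:Z * m (ordS i)) =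
          \sum_(j < L) ((ord_pred j : nat)%:Z * m j).
  rewrite (reindex_inj (@ord_pred_inj L)); apply: eq_bigr => j _.
  by rewrite ord_predK.
rewrite -big_split -sumrB /=; apply: eq_bigr => j _.
have := key j => /= kj.
by rewrite [RHS]mulrAC -kj; ring.
Qed.


Lemma tri (n : nat -> int) N :
  \sum_(t < N) \sum_(j < t.+1) n j = \sum_(j < N) (N%:Z - j%:Z) * n j.
Proof.
elim: N => [|N IH]; first by rewrite !big_ord0.
rewrite big_ord_recr IH /= [\sum_(j < N.+1) n j]big_ord_recr /= [RHS]big_ord_recr /=.
have -> : \sum_(i < N) (N.+1%:Z - i%:Z) * n i =
          \sum_(i < N) ((N%:Z - i%:Z) * n i + n i).
  apply: eq_bigr => i _; rewrite -addn1 PoszD; ring.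
rewrite big_split /= -addn1 PoszD.
change ((\sum_(j < N) (N%:Z - j%:Z) * n j) + ((\sum_(i < N) n i) + n N) =
   ((\sum_(i < N) (N%:Z - i%:Z) * n i) + (\sum_(i < N) n i)) + (N%:Z + 1%:Z - N%:Z) * n N).
ring.
Qed.

Lemma lap_exists (n : nat -> int) (c : int) :
  \sum_(i < L) n i = 0 -> \sum_(i < L) i%:Z * n i = c * L%:Z ->
  exists m : nat -> int, forall i, (i < L)%N -> lap L m i = n i.
Proof.
move=> H0 H1.
pose d (t : nat) := c + \sum_(j < t.+1) n j.
pose m (i : nat) := \sum_(t < i) d t.
have mS i : m i.+1 = m i + d i by rewrite /m big_ord_recr.
have m0 : m 0%N = 0 by rewrite /m big_ord0.
have mL : m L = 0.
  rewrite /m /d big_split /= tri sumr_const card_ord.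
  under eq_bigr do rewrite mulrBl.
  rewrite sumrB -mulr_sumr H0 mulr0 sub0r H1.
  by rewrite -mulrzz pmulrn subrr.
have mmod j : (j <= L)%N -> m (j %% L)%N = m j.
  move=> hj; case: (ltngtP j L) hj => // [hjL _|-> _].
    by rewrite modn_small.
  by rewrite modnn m0 mL.
exists m => i hi.
rewrite /lap.
case: i hi => [|i] hi.
- have e : L = (L - 1).+1 by lia.
  have h := mS (L - 1)%N; rewrite -e mL in h.
  rewrite add0n (modn_small (_ : (L - 1 < L)%N)); last by lia.
  rewrite mod0n m0 (mmod 1%N) // mS m0 /d big_ord1 -e in h *.
  rewrite mul0rn subr0 add0r.
  have -> : m (L - 1)%N = - (c + \sum_(j < L) n j) by apply/eqP; rewrite -addr_eq0 -h.
  by rewrite H0 addr0 addrA addNr add0r.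
- have -> : (i.+1 + L - 1 = i + L)%N by lia.
  rewrite modnDr (modn_small (_ : (i < L)%N)); last by lia.
  rewrite (modn_small hi) mmod // !mS /d [\sum_(j < i.+2) n j]big_ord_recr /=.
  rewrite mulr2n; ring.
Qed.

End Gen.

Lemma maxL_ge (R : realType) (L : nat) (f : nat -> R) i : (i < L)%N -> f i <= maxL L f.
Proof.
rewrite /maxL; move: (f 0%N) => x0.
elim: L f i => [|n IH] f i hi //.
rewrite big_ord_recl le_max.
case: i hi => [|i] hi; first by rewrite lexx.
apply/orP; right.
rewrite (eq_bigr (fun j : 'I_n => f j.+1)) //.
exact: (IH (fun j => f j.+1) i hi).
Qed.

Section MaxL.
Variable R : realType.
Variable L : nat.
Hypothesis L0 : (0 < L)%N.

Lemma maxL_le (f : nat -> R) x : (forall i, (i < L)%N -> f i <= x) -> maxL L f <= x.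
Proof.
move=> H; rewrite /maxL; apply: (big_ind (fun y => y <= x)).
- exact: H.
- by move=> a b ha hb; rewrite ge_max ha hb.
- by move=> i _; apply: H.
Qed.

Lemma maxL_ex (f : nat -> R) : exists2 i, (i < L)%N & maxL L f = f i.
Proof.
rewrite /maxL; apply: (big_ind (fun y => exists2 i, (i < L)%N & y = f i)).
- by exists 0%N.
- move=> a b [i hi ->] [j hj ->]; rewrite /Num.max.
  by case: ifP => _; [exists j | exists i].
- by move=> i _; exists i.
Qed.

Lemma maxL_eq (f : nat -> R) x : (forall i, (i < L)%N -> f i <= x) ->
  (exists2 i, (i < L)%N & f i = x) -> maxL L f = x.
Proof.
move=> H [i hi e]; apply/le_anti; rewrite -{2}e maxL_ge // andbT.
exact: maxL_le.
Qed.

Lemma maxL_scale (f : nat -> R) e : 0 <= e -> maxL L (fun i => e * f i) = e * maxL L f.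
Proof.
move=> he; have [j hj Ej] := maxL_ex f.
apply: maxL_eq.
- by move=> i hi; apply: ler_wpM2l => //; apply: maxL_ge.
- by exists j; rewrite // Ej.
Qed.

End MaxL.

Lemma count_lt_iota L t : (t <= L)%N -> count (fun u => (u < t)%N) (iota 0 L) = t.
Proof.
move=> htL; rewrite -(subnKC htL) iotaD count_cat add0n.
rewrite (eq_in_count (a2 := predT)); last by move=> u; rewrite mem_iota.
rewrite count_predT size_iota (eq_in_count (a2 := pred0)); last first.
  by move=> u; rewrite mem_iota /= => /andP[h _]; rewrite ltnNge h.
by rewrite count_pred0 addn0.
Qed.

Lemma count_gt_iota L t : (t < L)%N -> count (fun u => (t < u)%N) (iota 0 L) = (L - t.+1)%N.
Proof.
move=> htL.
have := count_predC (fun u => (u < t.+1)%N) (iota 0 L).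
rewrite count_lt_iota // size_iota => h.
have h' : count (fun u => (t < u)%N) (iota 0 L) =
          count (predC (fun u => (u < t.+1)%N)) (iota 0 L).
  by apply: eq_count => u; rewrite /= ltnNge.
rewrite h'; lia.
Qed.

Lemma sum_if L s (c : int) :
  \sum_(t < L) (if (s <= t)%N then c - 1 else c) = c * L%:Z - (L - s)%:Z.
Proof.
elim: L => [|L IH]; first by rewrite big_ord0 sub0n mulr0 subr0.
rewrite big_ord_recr /= IH.
case: leqP => h.
  have -> : (L.+1 - s)%N = ((L - s) + 1)%N by lia.
  rewrite -addn1 !PoszD; ring.
have -> : (L.+1 - s)%N = 0%N by lia.
have -> : (L - s)%N = 0%N by lia.
rewrite -addn1 !PoszD; ring.
Qed.

Lemma sum_ind L kn (F : nat -> int) : (kn < L)%N ->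
  \sum_(i < L) (if (i : nat) == kn then F i else 0) = F kn.
Proof.
move=> hk; rewrite (bigD1 (Ordinal hk)) //= eqxx big1 ?addr0 //.
move=> i hi; case: eqP => // e; exfalso; move/eqP: hi; apply.
by apply: val_inj.
Qed.

Lemma mod_eq (a b c L : int) : 0 <= a < L -> 0 <= b < L -> a - b = c * L -> a = b.
Proof.
move=> ha hb h; have hL : 0 <= L by lia.
have [c0|c0|c0] := ltgtP c 0.
- have c1 : c <= -1 by lia.
  have : c * L <= -1 * L by apply: ler_wpM2r.
  lia.
- have c1 : 1 <= c by lia.
  have : 1 * L <= c * L by apply: ler_wpM2r.
  lia.
- by move: h; rewrite c0 mul0r => /eqP; rewrite subr_eq0 => /eqP.
Qed.

Section Model.
Variable R : realType.
Variable L : nat.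
Variable alpha : nat -> R.
Variable sigma : nat -> nat.
Hypothesis L0 : (0 < L)%N.
Hypothesis hhalf : forall i (n : int), (i < L)%N -> lap L alpha i <> n%:~R + 2^-1.
Hypothesis sig_lt : forall i, (i < L)%N -> (sigma i < L)%N.
Hypothesis sig_inj : forall i j, (i < L)%N -> (j < L)%N -> sigma i = sigma j -> i = j.
Hypothesis sig_mono : forall i j, (i < j < L)%N ->
  omega L alpha (sigma i) < omega L alpha (sigma j).

Local Notation a i := (nint (lap L alpha i)).
Local Notation w := (omega L alpha).
Local Notation S := (Ssum L alpha).

Lemma lapa i : lap L alpha i = (a i)%:~R + w i.
Proof. by rewrite /omega addrC subrK. Qed.

Lemma w_bound i : (i < L)%N -> - 2^-1 < w i < 2^-1.
Proof.
move=> hi; rewrite /omega /nint.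
set x := lap L alpha i.
have := floor_itv (x + 2^-1); set f := Num.floor (x + 2^-1).
move=> /andP[h1 h2]; rewrite intrD in h2.
have hne : x - f%:~R != - 2^-1.
  apply/eqP => e; have := hhalf i (f - 1) hi; apply; rewrite -/x intrB; lra.
apply/andP; split; last by lra.
rewrite lt_neqAle eq_sym hne /=; lra.
Qed.

Lemma sum_w : \sum_(i < L) w i = - (S%:~R).
Proof.
have := @sum_lap L R alpha.
under eq_bigr do rewrite lapa.
rewrite big_split /= /Ssum rmorph_sum => h.
by apply/eqP; rewrite -addr_eq0 addrC h.
Qed.

Lemma S_bound : (2 * `|S| < L)%N.
Proof.
have hup : \sum_(i < L) w i < \sum_(i < L) (2^-1 : R).
  rewrite -(big_mkord xpredT w) -(big_mkord xpredT (fun=> 2^-1)).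
  apply: ltr_sum_nat => // i /andP[_ hi].
  by case/andP: (w_bound _ hi).
have hlo : \sum_(i < L) (- 2^-1 : R) < \sum_(i < L) w i.
  rewrite -(big_mkord xpredT w) -(big_mkord xpredT (fun=> - 2^-1)).
  apply: ltr_sum_nat => // i /andP[_ hi].
  by case/andP: (w_bound _ hi).
have c1 : \sum_(i < L) (2^-1 : R) = L%:R * 2^-1.
  by rewrite sumr_const card_ord mulr_natl.
have c2 : \sum_(i < L) (- 2^-1 : R) = - (L%:R * 2^-1).
  by rewrite sumr_const card_ord mulr_natl mulNrn.
rewrite sum_w c1 in hup; rewrite sum_w c2 in hlo.
have e : (L%:Z)%:~R = (L%:R : R) by [].
have e2 : (2%:~R : R) = 2 by [].
have h1 : ((2 * S)%:~R : R) < (L%:Z)%:~R by rewrite e intrM e2; lra.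
have h2 : ((- (2 * S))%:~R : R) < (L%:Z)%:~R by rewrite e intrN intrM e2; lra.
rewrite ltr_int in h1; rewrite ltr_int in h2.
lia.
Qed.


Lemma sig_perm : perm_eq (map sigma (iota 0 L)) (iota 0 L).
Proof.
have U : uniq (map sigma (iota 0 L)).
  rewrite map_inj_in_uniq ?iota_uniq // => x y.
  rewrite !mem_iota !add0n => /andP[_ hx] /andP[_ hy]; exact: sig_inj.
have sub : {subset map sigma (iota 0 L) <= iota 0 L}.
  move=> x /mapP[y]; rewrite !mem_iota !add0n => /andP[_ hy] ->.
  by rewrite sig_lt.
have [_ eqm] := uniq_min_size U sub (eq_leq (esym (size_map sigma (iota 0 L)))).
exact: uniq_perm U (iota_uniq 0 L) eqm.
Qed.

Lemma sig_surj i : (i < L)%N -> exists2 t, (t < L)%N & sigma t = i.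
Proof.
move=> hi; have : i \in map sigma (iota 0 L) by rewrite (perm_mem sig_perm) mem_iota.
by case/mapP => t; rewrite mem_iota add0n => /andP[_ ht] ->; exists t.
Qed.

Lemma sum_sig (F : nat -> int) : \sum_(i < L) F i = \sum_(t < L) F (sigma t).
Proof.
rewrite -(big_mkord xpredT F) -(big_mkord xpredT (fun t => F (sigma t))).
by rewrite /index_iota subn0 -[LHS](perm_big _ sig_perm) big_map.
Qed.

Lemma sig_mono_iff t u : (t < L)%N -> (u < L)%N ->
  (w (sigma t) < w (sigma u)) = (t < u)%N.
Proof.
move=> ht hu; case: (ltngtP t u) => h.
- by apply: sig_mono; rewrite h hu.
- apply/negbTE; rewrite -leNgt; apply/ltW; apply: sig_mono; by rewrite h ht.
- by rewrite h ltxx.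
Qed.

Lemma sig_le t u : (t <= u)%N -> (u < L)%N -> w (sigma t) <= w (sigma u).
Proof.
move=> h hu; case: (ltngtP t u) h => // [htu _|-> _].
  by apply/ltW; apply: sig_mono; rewrite htu hu.
by [].
Qed.

Lemma sig_eq t u : (t < L)%N -> (u < L)%N -> (sigma t == sigma u) = (t == u).
Proof.
by move=> ht hu; apply/eqP/eqP => [/(sig_inj _ _ ht hu)|->].
Qed.

Lemma rank_sig t : (t < L)%N ->
  count (fun j => w j < w (sigma t)) (iota 0 L) = t.
Proof.
move=> ht; rewrite -(permP sig_perm) count_map.
rewrite (eq_in_count (a2 := fun u => (u < t)%N)); first exact: count_lt_iota (ltnW ht).
move=> u; rewrite mem_iota add0n => /andP[_ hu] /=; exact: sig_mono_iff.
Qed.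

Lemma rank_sig' t : (t < L)%N ->
  count (fun j => w (sigma t) < w j) (iota 0 L) = (L - t.+1)%N.
Proof.
move=> ht; rewrite -(permP sig_perm) count_map.
rewrite (eq_in_count (a2 := fun u => (t < u)%N)); first exact: count_gt_iota.
move=> u; rewrite mem_iota add0n => /andP[_ hu] /=; exact: sig_mono_iff.
Qed.

Lemma J_sig t : (t < L)%N -> Jv L alpha (sigma t) =
  if 0 <= S then (if (`|S|.+1 <= t)%N then 0 else 1)
  else (if ((L - `|S|).+1 <= t)%N then -1 else 0).
Proof.
move=> ht; rewrite /Jv /=; case: ifP => hS.
  by rewrite rank_sig // ltnNge; case: (t <= `|S|)%N.
rewrite rank_sig'//.
have hb := S_bound.
have -> : ((L - t.+1).+1 <= `|S|.-1)%N = ((L - `|S|).+1 <= t)%N.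
  apply/idP/idP; lia.
by [].
Qed.


Definition good (p : nat -> int) :=
  \sum_(i < L) p i = S /\
  exists c : int, \sum_(i < L) i%:Z * (p i - a i) = c * L%:Z.

Lemma good_lap (m : nat -> int) : good (fun i => lap L m i + a i).
Proof.
split; first by rewrite big_split /= sum_lap add0r.
have [c hc] := @sum_ilap L L0 m; exists c.
by under eq_bigr do rewrite addrK.
Qed.

Lemma good_ex p : good p -> exists m : nat -> int,
  forall i, (i < L)%N -> lap L m i + a i = p i.
Proof.
case=> hs [c hc].
have [|m hm] := @lap_exists L L0 (fun i => p i - a i) c _ hc.
  by rewrite sumrB hs subrr.
by exists m => i hi; rewrite hm // subrK.
Qed.

Lemma zcE m i : zc L alpha m i = (lap L m i + a i)%:~R + w i.
Proof. by rewrite /zc (intrD _ (lap L m i)) -[RHS]addrA -lapa. Qed.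

Local Notation X := (\sum_(i < L) (i%:Z) * (- a i + Jv L alpha i)).

Lemma k_nat : exists2 kn : nat, (kn < L)%N & kplus L alpha = kn%:Z.
Proof.
have h0 : 0 <= kplus L alpha by apply: modz_ge0; lia.
have h1 : kplus L alpha < L%:Z by apply: ltz_pmod; lia.
exists `|kplus L alpha|%N; lia.
Qed.

Lemma k_eq : X = (X %/ L%:Z)%Z * L%:Z + kplus L alpha.
Proof. exact: divz_eq. Qed.

Lemma Jsum : \sum_(i < L) Jv L alpha i = S + 1.
Proof.
have hb := S_bound.
rewrite sum_sig.
have [hS|hS] := boolP (0 <= S).
  rewrite (eq_bigr (fun t : 'I_L => if (`|S|.+1 <= t)%N then 1 - 1 else 1)); last first.
    by move=> t _; rewrite (J_sig _ (ltn_ord t)) hS subrr.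
  rewrite sum_if; lia.
rewrite (eq_bigr (fun t : 'I_L => if ((L - `|S|).+1 <= t)%N then 0 - 1 else 0)); last first.
  by move=> t _; rewrite (J_sig _ (ltn_ord t)) (negbTE hS) sub0r.
rewrite sum_if; lia.
Qed.

Definition pw (kn : nat) (i : nat) : int :=
  Jv L alpha i - (if i == kn then 1 else 0).

Lemma pw_good kn : (kn < L)%N -> kplus L alpha = kn%:Z -> good (pw kn).
Proof.
move=> hk hkk; split.
  rewrite /pw sumrB Jsum (@sum_ind L kn (fun _ => 1)) //; ring.
exists (X %/ L%:Z)%Z.
have -> : \sum_(i < L) i%:Z * (pw kn i - a i) =
   X - \sum_(i < L) (if (i : nat) == kn then (i : nat)%:Z else 0).
  rewrite -sumrB; apply: eq_bigr => i _; rewrite /pw.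
  by case: eqP => _; ring.
rewrite (@sum_ind L kn (fun i => i%:Z)) // -hkk {1}k_eq; ring.
Qed.


Lemma eta_gt0 (lambda : R) : 0 < lambda -> 0 < eta_lam lambda.
Proof.
move=> hl; rewrite /eta_lam divr_gt0 //.
have := sqrtr_ge0 (lambda ^+ 2 + 4 * lambda); lra.
Qed.

Lemma key (lambda : R) s (c : int) kn : 0 < lambda -> (s < L)%N -> (kn < L)%N ->
  kplus L alpha = kn%:Z ->
  (forall t, (t < L)%N -> pw kn (sigma t) <= (if (s < t)%N then c - 1 else c)) ->
  pw kn (sigma s) = c ->
  (forall p, good p -> (forall t, (t < L)%N ->
       p (sigma t) <= (if (s <= t)%N then c - 1 else c)) -> False) ->
  (exists mp : nat -> int, is_threshold_config L alpha mp) /\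
  (forall mp, is_threshold_config L alpha mp ->
      maxL L (zc L alpha mp) = w (sigma s) + c%:~R) /\
  Fth L lambda alpha = lambda * (2^-1 - eta_lam lambda * (w (sigma s) + c%:~R)).
Proof.
move=> hl hs hk hkk W1 W2 N.
set T := w (sigma s) + c%:~R.
have [ms hms] := good_ex _ (pw_good kn hk hkk).
have Mms : maxL L (zc L alpha ms) = T.
  apply: (@maxL_eq R L L0).
  - move=> i hi; have [t ht <-] := sig_surj _ hi.
    rewrite zcE hms ?sig_lt // /T.
    have := W1 t ht; case: ltnP => hst hp.
    + have /andP[b1 b2] := w_bound _ (sig_lt _ ht).
      have /andP[b3 b4] := w_bound _ (sig_lt _ hs).
      have : (pw kn (sigma t))%:~R <= ((c - 1)%:~R : R) by rewrite ler_int.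
      rewrite intrB; lra.
    + have hw := sig_le _ _ hst hs.
      have : (pw kn (sigma t))%:~R <= (c%:~R : R) by rewrite ler_int.
      lra.
  - exists (sigma s); first exact: sig_lt _ hs.
    by rewrite zcE hms ?(sig_lt _ hs) // W2 addrC.
have LB m : T <= maxL L (zc L alpha m).
  rewrite leNgt; apply/negP => hlt.
  apply: (N _ (good_lap m)) => t ht.
  have h := @maxL_ge R L (zc L alpha m) _ (sig_lt _ ht).
  rewrite zcE in h; have h2 := le_lt_trans h hlt; rewrite /T in h2.
  move: h2; set q := lap L m (sigma t) + a (sigma t) => h2.
  case: leqP => hst.
  + have hw := sig_le _ _ hst ht.
    have : (q%:~R : R) < c%:~R by lra.
    rewrite ltr_int; lia.
  + have /andP[b1 b2] := w_bound _ (sig_lt _ ht).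
    have /andP[b3 b4] := w_bound _ (sig_lt _ hs).
    have : (q%:~R : R) < (c + 1)%:~R by rewrite intrD; lra.
    rewrite ltr_int; lia.
split; first by exists ms => m'; rewrite Mms; apply: LB.
split.
  by move=> mp hmp; apply/le_anti; rewrite LB andbT -Mms; exact: hmp.
rewrite /Fth.
have he := eta_gt0 _ hl.
have Hy m : maxL L (ytilde L lambda alpha m) = eta_lam lambda * maxL L (zc L alpha m).
  by rewrite -(@maxL_scale R L L0) // ltW.
set E := (X in inf X).
have hlb : lbound E (eta_lam lambda * T).
  by move=> y [m _ <-]; rewrite Hy ler_wpM2l // ?LB // ltW.
have -> : inf E = eta_lam lambda * T.
  apply/le_anti/andP; split.
  - apply: (ge_inf (ex_intro _ _ hlb)).
    by exists ms => //; rewrite Hy Mms.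
  - apply: lb_le_inf => //.
    by exists (maxL L (ytilde L lambda alpha ms)); exists ms.
by [].
Qed.


Lemma sum_le p b : good p -> (forall t, (t < L)%N -> p (sigma t) <= b t) ->
  S <= \sum_(t < L) b t.
Proof.
case=> hs _ hle; rewrite -hs sum_sig; apply: ler_sum => t _; exact: hle.
Qed.

Lemma force p s (c : int) kn : good p -> (s < L)%N -> (kn < L)%N ->
  kplus L alpha = kn%:Z ->
  (forall t, (t < L)%N -> p (sigma t) <= (if (s <= t)%N then c - 1 else c)) ->
  \sum_(t < L) (if (s <= t)%N then c - 1 else c) = S ->
  (forall t, (t < L)%N ->
     Jv L alpha (sigma t) - (if (s <= t)%N then c - 1 else c) = (if t == s then 1 else 0)) ->
  kn = sigma s.
Proof.
move=> [hsum [c1 hc1]] hs hk hkk hle hbs hJ.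
set b := fun t : nat => if (s <= t)%N then c - 1 else c.
have eqb : forall t, (t < L)%N -> p (sigma t) = b t.
  have h0 : \sum_(t < L) (b t - p (sigma t)) = 0.
    by rewrite sumrB hbs -sum_sig hsum subrr.
  have hnn : forall i : 'I_L, xpredT i -> 0 <= b i - p (sigma i).
    by move=> i _; rewrite subr_ge0 hle.
  move=> t ht.
  have hz := @psumr_eq0P _ _ xpredT (fun t : 'I_L => b t - p (sigma t)) hnn h0 (Ordinal ht) isT.
  by apply/eqP; rewrite eq_sym -subr_eq0; apply/eqP.
have hJp : \sum_(i < L) i%:Z * (Jv L alpha i - p i) = (sigma s)%:Z.
  rewrite (sum_sig (fun i => i%:Z * (Jv L alpha i - p i))).
  rewrite (eq_bigr (fun t : 'I_L => if (t : nat) == s then (sigma t)%:Z else 0)).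
    exact: (@sum_ind L s (fun t => (sigma t)%:Z)).
  move=> t _; rewrite eqb // hJ //; by case: eqP => _; ring.
have : \sum_(i < L) i%:Z * (Jv L alpha i - p i) = X - \sum_(i < L) i%:Z * (p i - a i).
  by rewrite -sumrB; apply: eq_bigr => i _; ring.
rewrite hJp hc1 {1}k_eq hkk => h.
have hsL := sig_lt _ hs.
apply/eqP; rewrite -(eqr_nat int); apply/eqP.
apply: (@mod_eq _ _ (c1 - (X %/ L%:Z)%Z) L%:Z); try lia.
all: rewrite h; ring.
Qed.


Definition concl (lambda : R) s (c : int) :=
  (exists mp : nat -> int, is_threshold_config L alpha mp) /\
  (forall mp, is_threshold_config L alpha mp ->
      maxL L (zc L alpha mp) = w (sigma s) + c%:~R) /\
  Fth L lambda alpha = lambda * (2^-1 - eta_lam lambda * (w (sigma s) + c%:~R)).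

Ltac crunch := repeat (case: ifP => /= ?); lia.

Lemma caseA lambda kn : 0 < lambda -> (kn < L)%N -> kplus L alpha = kn%:Z ->
  0 <= S -> kn <> sigma `|S| -> concl lambda `|S| 1.
Proof.
move=> hl hk hkk hS hne; have hb := S_bound.
have hs : (`|S| < L)%N by lia.
apply: (key lambda `|S| 1 kn hl hs hk hkk).
- move=> t ht; rewrite /pw J_sig // hS; crunch.
- have e : (sigma `|S| == kn) = false by apply/eqP => e; apply: hne; rewrite e.
  by rewrite /pw J_sig // hS e ltnn subr0.
- move=> p gp hle; apply: hne; apply: (force p `|S| 1 kn gp hs hk hkk hle).
  + rewrite sum_if; lia.
  + move=> t ht; rewrite J_sig // hS; crunch.
Qed.


Lemma caseB lambda kn : 0 < lambda -> (kn < L)%N -> kplus L alpha = kn%:Z ->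
  0 < S -> kn = sigma `|S| -> concl lambda (`|S| - 1)%N 1.
Proof.
move=> hl hk hkk hS hkn; have hb := S_bound.
have hS0 : 0 <= S by lia.
have hs : ((`|S| - 1)%N < L)%N by lia.
have hsL : (`|S| < L)%N by lia.
apply: (key lambda (`|S| - 1)%N 1 kn hl hs hk hkk).
- move=> t ht; rewrite /pw J_sig // hS0 hkn sig_eq //; crunch.
- rewrite /pw J_sig // hS0 hkn sig_eq //; crunch.
- move=> p gp hle; have := sum_le _ _ gp hle; rewrite sum_if; lia.
Qed.

Lemma caseC lambda kn : 0 < lambda -> (kn < L)%N -> kplus L alpha = kn%:Z ->
  S = 0 -> kn = sigma 0%N -> concl lambda (L - 1)%N 0.
Proof.
move=> hl hk hkk hS hkn.
have hS0 : 0 <= S by rewrite hS.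
have hs : ((L - 1)%N < L)%N by lia.
apply: (key lambda (L - 1)%N 0 kn hl hs hk hkk).
- move=> t ht; rewrite /pw J_sig // hS0 hkn sig_eq // hS; crunch.
- rewrite /pw J_sig // hS0 hkn sig_eq // hS; crunch.
- move=> p gp hle; have := sum_le _ _ gp hle; rewrite sum_if; lia.
Qed.

Lemma caseD lambda kn : 0 < lambda -> (kn < L)%N -> kplus L alpha = kn%:Z ->
  S < 0 -> kn <> sigma (L - `|S|)%N -> concl lambda (L - `|S|)%N 0.
Proof.
move=> hl hk hkk hS hne; have hb := S_bound.
have hS0 : (0 <= S) = false by rewrite leNgt hS.
have hs : ((L - `|S|)%N < L)%N by lia.
apply: (key lambda (L - `|S|)%N 0 kn hl hs hk hkk).
- move=> t ht; rewrite /pw J_sig // hS0; crunch.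
- have e : (sigma (L - `|S|)%N == kn) = false by apply/eqP => e; apply: hne; rewrite e.
  rewrite /pw J_sig // hS0 e; crunch.
- move=> p gp hle; apply: hne; apply: (force p (L - `|S|)%N 0 kn gp hs hk hkk hle).
  + rewrite sum_if; lia.
  + move=> t ht; rewrite J_sig // hS0; crunch.
Qed.

Lemma caseE lambda kn : 0 < lambda -> (kn < L)%N -> kplus L alpha = kn%:Z ->
  S < 0 -> kn = sigma (L - `|S|)%N -> concl lambda (L - `|S| - 1)%N 0.
Proof.
move=> hl hk hkk hS hkn; have hb := S_bound.
have hS0 : (0 <= S) = false by rewrite leNgt hS.
have hs : ((L - `|S| - 1)%N < L)%N by lia.
have hsL : ((L - `|S|)%N < L)%N by lia.
apply: (key lambda (L - `|S| - 1)%N 0 kn hl hs hk hkk).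
- move=> t ht; rewrite /pw J_sig // hS0 hkn sig_eq //; crunch.
- rewrite /pw J_sig // hS0 hkn sig_eq //; crunch.
- move=> p gp hle; have := sum_le _ _ gp hle; rewrite sum_if; lia.
Qed.

End Model.

Theorem corollary1 (R : realType) (L : nat) (lambda : R) (alpha : nat -> R)
  (sigma : nat -> nat) :
  (0 < L)%N ->
  0 < lambda ->
  (forall i, (i < L)%N -> - 2^-1 < alpha i < 2^-1) ->
  (* almost-sure genericity: the ω_i are pairwise distinct and no Δα_i is a
     half-integer *)
  (forall i j, (i < L)%N -> (j < L)%N -> omega L alpha i = omega L alpha j -> i = j) ->
  (forall i (n : int), (i < L)%N -> lap L alpha i <> n%:~R + 2^-1) ->
  (* sigma is the permutation of {0..L-1} sorting ω increasingly *)
  (forall i, (i < L)%N -> (sigma i < L)%N) ->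
  (forall i j, (i < L)%N -> (j < L)%N -> sigma i = sigma j -> i = j) ->
  (forall i j, (i < j < L)%N -> omega L alpha (sigma i) < omega L alpha (sigma j)) ->
  let S := Ssum L alpha in
  let w := omega L alpha in
  let k := kplus L alpha in
  (exists mp : nat -> int, is_threshold_config L alpha mp) /\
  forall mp : nat -> int, is_threshold_config L alpha mp ->
  let zmax := maxL L (zc L alpha mp) in
  ((0 <= S) -> k <> (sigma `|S|%N)%:Z -> zmax = w (sigma `|S|%N) + 1) /\
  ((0 < S) -> k = (sigma `|S|%N)%:Z -> zmax = w (sigma (`|S| - 1)%N) + 1) /\
  (S = 0 -> k = (sigma 0%N)%:Z -> zmax = w (sigma (L - 1)%N)) /\
  (S < 0 -> k <> (sigma (L - `|S|)%N)%:Z -> zmax = w (sigma (L - `|S|)%N)) /\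
  (S < 0 -> k = (sigma (L - `|S|)%N)%:Z -> zmax = w (sigma (L - `|S| - 1)%N)) /\
  Fth L lambda alpha = lambda * (2^-1 - eta_lam lambda * zmax).
Proof.
move=> L0 hl _ _ hhalf sig_lt sig_inj sig_mono; cbv zeta.
have [kn hk hkk] := @k_nat R L alpha L0.
have hb := @S_bound R L alpha L0 hhalf.
have CA := @caseA R L alpha sigma L0 hhalf sig_lt sig_inj sig_mono lambda kn hl hk hkk.
have CB := @caseB R L alpha sigma L0 hhalf sig_lt sig_inj sig_mono lambda kn hl hk hkk.
have CC := @caseC R L alpha sigma L0 hhalf sig_lt sig_inj sig_mono lambda kn hl hk hkk.
have CD := @caseD R L alpha sigma L0 hhalf sig_lt sig_inj sig_mono lambda kn hl hk hkk.
have CE := @caseE R L alpha sigma L0 hhalf sig_lt sig_inj sig_mono lambda kn hl hk hkk.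
rewrite hkk.
have Hall : exists s c, concl R L alpha sigma lambda s c.
  have [hS|hS] := boolP (0 <= Ssum L alpha).
    case: (eqVneq kn (sigma `|Ssum L alpha|%N)) => e.
      have [hS0|hS0] := boolP (Ssum L alpha == 0).
        move/eqP: hS0 => hS0; exists (L - 1)%N, 0; apply: CC => //.
        by rewrite e hS0.
      by exists (`|Ssum L alpha| - 1)%N, 1; apply: CB => //; lia.
    by exists `|Ssum L alpha|%N, 1; apply: CA => //; apply/eqP.
  have hS' : Ssum L alpha < 0 by lia.
  case: (eqVneq kn (sigma (L - `|Ssum L alpha|)%N)) => e.
    by exists (L - `|Ssum L alpha| - 1)%N, 0; apply: CE.
  by exists (L - `|Ssum L alpha|)%N, 0; apply: CD => //; apply/eqP.
have [s0 [c0 [Hex _]]] := Hall.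
split; first exact: Hex.
move=> mp hmp.
split.
  move=> hS hne; have [_ [H _]] := CA hS (fun e => hne (congr1 Posz e)).
  by rewrite H.
split.
  move=> hS [e]; have [_ [H _]] := CB hS e.
  by rewrite H.
split.
  move=> hS [e]; have [_ [H _]] := CC hS e.
  by rewrite (H mp hmp); ring.
split.
  move=> hS hne; have [_ [H _]] := CD hS (fun e => hne (congr1 Posz e)).
  by rewrite (H mp hmp); ring.
split.
  move=> hS [e]; have [_ [H _]] := CE hS e.
  by rewrite (H mp hmp); ring.
have [s [c [_ [H2 H3]]]] := Hall.
by rewrite H3 (H2 mp hmp).
Qed.
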